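(* Let $\nu\in\mathbb{N}$ and $0<x\le1$. Then $1\le D_{\nu,x}<\infty$.
   Context: $|\cdot|$ is the maximum norm on $\mathbb{Z}^\nu$. $D_{\nu,x}:=\sup_{n\in\mathbb{Z}^\nu,\sigma\ge1/4}\sum_{m\in\mathbb{Z}^\nu}\frac{e^{\sigma|n|^x}}{e^{\sigma|m|^x}e^{\sigma|n-m|^x}}$ if $0<x<1$, and $D_{\nu,1}:=\sup_{n\in\mathbb{Z}^\nu,\sigma\ge1/4}\sum_{m\in\mathbb{Z}^\nu}\frac{(1+|n|)^{\nu+1}e^{\sigma|n|}}{(1+|m|)^{\nu+1}e^{\sigma|m|}(1+|n-m|)^{\nu+1}e^{\sigma|n-m|}}$. *)

(* Defs.v *)
From HB Require Import structures.
From mathcomp Require Import all_boot all_order all_algebra.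
From mathcomp Require Import all_classical all_reals all_analysis.
Set Implicit Arguments. Unset Strict Implicit. Unset Printing Implicit Defensive.
Import Order.TTheory GRing.Theory Num.Theory.
Local Open Scope classical_set_scope.
Local Open Scope ring_scope.

Definition Zpt (nu : nat) := {ffun 'I_nu -> int}.

Definition zsub (nu : nat) (n m : Zpt nu) : Zpt nu := [ffun i => n i - m i].

(* Maximum norm |n| = max_i |n_i| on Z^nu, as a real number (0 if nu = 0). *)
Definition maxnorm (R : realType) (nu : nat) (n : Zpt nu) : R :=
  ((\max_(i < nu) `|n i|%N)%N)%:R.

Definition Dterm_sub (R : realType) (nu : nat) (x sigma : R) (n m : Zpt nu) : R :=
  expR (sigma * maxnorm R n `^ x) /
  (expR (sigma * maxnorm R m `^ x) * expR (sigma * maxnorm R (zsub n m) `^ x)).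

Definition Dweight (R : realType) (nu : nat) (sigma k : R) : R :=
  (1 + k) ^+ nu.+1 * expR (sigma * k).

Definition Dterm_one (R : realType) (nu : nat) (sigma : R) (n m : Zpt nu) : R :=
  @Dweight R nu sigma (maxnorm R n) /
  (@Dweight R nu sigma (maxnorm R m) * @Dweight R nu sigma (maxnorm R (zsub n m))).

Definition Dterm (R : realType) (nu : nat) (x sigma : R) (n m : Zpt nu) : R :=
  if x < 1 then @Dterm_sub R nu x sigma n m else @Dterm_one R nu sigma n m.

Definition Dconst (R : realType) (nu : nat) (x : R) : \bar R :=
  ereal_sup [set y : \bar R | exists (n : Zpt nu), exists2 sigma : R,
     4^-1 <= sigma & y = \esum_(m in [set: Zpt nu]) (@Dterm R nu x sigma n m)%:E].

(* Main.v *)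
Require Import Defs.
From HB Require Import structures.
From mathcomp Require Import all_boot all_order all_algebra.
From mathcomp Require Import all_classical all_reals all_analysis.
From mathcomp Require Import zify ring lra.
Import Order.TTheory GRing.Theory Num.Theory.
Local Open Scope ring_scope.

Section Aux.
Variable R : realType.

Lemma bern (x u : R) : 0 <= x -> x <= 1 -> 0 <= u -> (1+u) `^ x <= 1 + x*u.
Proof.
move=> x0 x1 u0.
have h := @concave_ln R (Itv01 x0 x1) (1+u) 1 ltac:(lra) ltac:(lra).
rewrite !convRE /= ln1 mulr0 addr0 in h.
rewrite /powR gt_eqF; last lra.
rewrite -[X in _ <= X]lnK; last by rewrite posrE; nra.
rewrite ler_expR (le_trans h) //.
rewrite le_eqVlt; apply/orP; left; apply/eqP; congr (ln _); rewrite /unstable.onem; lra.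
Qed.



Lemma subadd (x a b c : R) : 0 < x -> x <= 1 -> 0 <= a -> 0 <= b -> b <= c -> a <= b + c ->
  a `^ x <= c `^ x + x * b `^ x.
Proof.
move=> x0 x1 a0 b0 bc abc.
have [c0|cpos] := eqVneq c 0.
  have -> : a = 0 by lra.
  have -> : b = 0 by lra.
  rewrite c0 powR0 ?gt_eqF //; lra.
have cp : 0 < c by lra.
apply: (le_trans (ge0_ler_powR (ltW x0) _ _ abc)); rewrite ?nnegrE; try lra.
have -> : b + c = c * (1 + b / c) by field; lra.
set u := b / c.
have u0 : 0 <= u by rewrite /u divr_ge0 //; lra.
have u1 : u <= 1 by rewrite /u ler_pdivrMr //; lra.
rewrite powRM; try lra.
have hc : 0 <= c `^ x by apply: powR_ge0.
apply: (@le_trans _ _ (c `^ x * (1 + x * u))).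
  by rewrite ler_wpM2l // bern //; lra.
rewrite mulrDr mulr1 lerD2l mulrCA ler_wpM2l //; first lra.
have [bz|bpos] := eqVneq b 0.
  by rewrite /u bz mul0r mulr0 powR0 ?gt_eqF.
have hb : b `^ x = u `^ x * c `^ x.
  by rewrite -powRM ?(ltW cp) // /u divfK // gt_eqF.
rewrite hb.
rewrite mulrC ler_pM2r ?powR_gt0 //.
apply: ger1_powR => //; apply/andP; split => //.
rewrite /u divr_gt0 //; lra.
Qed.


Lemma growth (x d : R) (q : nat) : 0 < x -> 0 < d ->
  exists C : R, 0 <= C /\ forall t : R, 0 <= t -> (1 + t) ^+ q <= C * expR (d * t `^ x).
Proof.
move=> x0 d0.
have hq : 0 <= q%:R / x by rewrite divr_ge0 // ltW.
set n := Num.Def.archi_bound (q%:R / x).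
have hn := archi_boundP hq; rewrite -/n in hn.
set N := n.+1.
have dN : 0 < d ^+ N by rewrite exprn_gt0.
have fN : 0 < (N`!)%:R :> R by rewrite ltr0n fact_gt0.
have hK : 0 <= (N`!)%:R / d ^+ N by rewrite divr_ge0 // ltW.
exists (2 ^+ q * (1 + (N`!)%:R / d ^+ N)); split.
  by rewrite mulr_ge0 // ?exprn_ge0 //; lra.
move=> t t0.
have e1 : 1 <= expR (d * t `^ x).
  have := expR_ge1Dx (d * t `^ x).
  have : 0 <= d * t `^ x by rewrite mulr_ge0 ?powR_ge0 // ltW.
  lra.
have [t1|t1] := lerP t 1.
  have h2 : (1 + t) ^+ q <= 2 ^+ q by rewrite lerXn2r ?nnegrE //; lra.
  apply: (le_trans h2).
  rewrite -[X in X <= _]mulr1 -mulrA ler_wpM2l ?exprn_ge0 //.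
  have : 1 * 1 <= (1 + (N`!)%:R / d ^+ N) * expR (d * t `^ x).
    by apply: ler_pM => //; lra.
  lra.
have h2 : (1 + t) ^+ q <= 2 ^+ q * t ^+ q.
  by rewrite -exprMn lerXn2r ?nnegrE //; lra.
apply: (le_trans h2); rewrite -mulrA ler_wpM2l ?exprn_ge0 //.
set y := d * t `^ x.
have y0 : 0 <= y by rewrite mulr_ge0 ?powR_ge0 // ltW.
have hy := expR_ge1Dxn n y0; rewrite -/N in hy.
have htq : t ^+ q <= (t `^ x) ^+ N.
  rewrite -(powR_mulrn N (powR_ge0 t x)) -powRrM -(powR_mulrn q t0).
  apply: ler_powR; first lra.
  have : q%:R / x <= N%:R by rewrite /N -addn1 natrD; lra.
  by rewrite ler_pdivrMr // mulrC.
have hty : (t `^ x) ^+ N = y ^+ N / d ^+ N.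
  by rewrite /y exprMn mulrC mulKf // gt_eqF.
apply: (le_trans htq); rewrite hty.
have : y ^+ N / d ^+ N <= (N`!)%:R / d ^+ N * expR y.
  rewrite [X in _ <= X]mulrAC ler_pM2r ?invr_gt0 //.
  have : y ^+ N / (N`!)%:R <= expR y by lra.
  by rewrite ler_pdivrMr // mulrC.
have : 0 <= expR y by apply: expR_ge0.
nra.
Qed.


Definition FF (q : nat) (t : R) : R := ((1 + t) ^+ q)^-1.

Lemma pow_diff (a : R) n : 0 <= a -> (a + 1) ^+ n.+1 - a ^+ n.+1 <= n.+1%:R * (a + 1) ^+ n.
Proof.
move=> a0; elim: n => [|n IH]; first by rewrite !expr1 expr0 mulr1; lra.
have h1 : a ^+ n.+1 <= (a + 1) ^+ n.+1 by rewrite lerXn2r ?nnegrE //; lra.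
rewrite [(a+1) ^+ n.+2]exprS [a ^+ n.+2]exprS [(a+1) ^+ n.+1]exprS.
rewrite [(a+1) ^+ n.+1]exprS in h1.
have e : n.+2%:R = n.+1%:R + 1 :> R by rewrite -addn1 natrD.
rewrite e.
have hp : 0 <= (a+1) ^+ n by rewrite exprn_ge0 //; lra.
have hq : 0 <= a ^+ n.+1 by rewrite exprn_ge0.
rewrite exprS in IH h1 hq.
nra.
Qed.

Lemma term_bound (nu k : nat) :
  (k.*2.+1)%:R ^+ nu * (FF nu.+1 k%:R - FF nu.+1 k.+1%:R)
  <= 2 ^+ nu * nu.+1%:R * ((k.+1%:R)^-1 - (k.+2%:R)^-1).
Proof.
set a : R := k.+1%:R.
have ea : k.+1%:R = 1 + k%:R :> R by rewrite -add1n natrD.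
have ea2 : k.+2%:R = 1 + k.+1%:R :> R by rewrite -add1n natrD.
have a0 : 0 < a by rewrite /a ltr0n.
rewrite /FF -ea -ea2 ea2 -/a.
set A := a ^+ nu; set B := (1 + a) ^+ nu.
have A0 : 0 < A by rewrite exprn_gt0.
have B0 : 0 < B by rewrite exprn_gt0 //; lra.
have hP : (k.*2.+1)%:R ^+ nu <= 2 ^+ nu * A.
  rewrite /A -exprMn lerXn2r ?nnegrE ?ler0n //; first by rewrite mulr_ge0 // ltW.
  by rewrite /a -natrM ler_nat; lia.
have hD : B * (1 + a) - A * a <= nu.+1%:R * B.
  have := @pow_diff a nu (ltW a0).
  by rewrite /A /B !exprSr (addrC a 1).
have hD0 : 0 <= B * (1 + a) - A * a.
  have : A <= B by rewrite lerXn2r ?nnegrE //; lra.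
  nra.
have P0 : 0 <= (k.*2.+1)%:R ^+ nu :> R by rewrite exprn_ge0 // ler0n.
have -> : (a ^+ nu.+1)^-1 - ((1 + a) ^+ nu.+1)^-1 = (B * (1 + a) - A * a) / (A * B * (a * (1 + a))).
  rewrite !exprSr -/A -/B; field; repeat split; lra.
have -> : a^-1 - (1 + a)^-1 = 1 / (a * (1 + a)) by field; lra.
have -> : 2 ^+ nu * nu.+1%:R * (1 / (a * (1 + a))) = (2 ^+ nu * A) * (nu.+1%:R * B) / (A * B * (a * (1 + a))).
  field; repeat split; lra.
rewrite mulrA ler_pM2r; last by rewrite invr_gt0 !mulr_gt0 //; lra.
apply: ler_pM => //.
Qed.

Lemma FF_ge0 q t : 0 <= t -> 0 <= FF q t.
Proof. by move=> t0; rewrite /FF invr_ge0 exprn_ge0 //; lra. Qed.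


Lemma pt_one (q : nat) (s a b c : R) : 0 <= s -> 0 <= a -> 0 <= b -> 0 <= c -> a <= b + c ->
  ((1 + a) ^+ q * expR (s * a)) / (((1 + b) ^+ q * expR (s * b)) * ((1 + c) ^+ q * expR (s * c)))
  <= 2 ^+ q * (FF q b + FF q c).
Proof.
move=> s0 a0 b0 c0 abc.
wlog bc : b c b0 c0 abc / b <= c.
  move=> H; case: (lerP b c) => [h|/ltW h]; first exact: H.
  rewrite (mulrC ((1 + b) ^+ q * _)) (addrC (FF q b)); apply: H => //; lra.
apply: (@le_trans _ _ (2 ^+ q * FF q b)); last first.
  by rewrite ler_wpM2l ?exprn_ge0 // lerDl FF_ge0.
have pb : 0 < (1 + b) ^+ q by rewrite exprn_gt0 //; lra.
have pc : 0 < (1 + c) ^+ q by rewrite exprn_gt0 //; lra.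
have eb := expR_gt0 (s * b); have ec := expR_gt0 (s * c).
rewrite ler_pdivrMr; last by rewrite !mulr_gt0.
have -> : 2 ^+ q * FF q b * ((1 + b) ^+ q * expR (s * b) * ((1 + c) ^+ q * expR (s * c)))
   = (2 * (1 + c)) ^+ q * (expR (s * b) * expR (s * c)).
  rewrite /FF exprMn; field; lra.
apply: ler_pM; first by rewrite exprn_ge0 //; lra.
- exact: expR_ge0.
- by rewrite lerXn2r ?nnegrE //; lra.
- rewrite -expRD ler_expR -mulrDr ler_wpM2l //.
Qed.

Lemma pt_sub (q : nat) (x C s a b c : R) : 0 < x -> x < 1 -> 4^-1 <= s ->
  0 <= a -> 0 <= b -> 0 <= c -> a <= b + c ->
  (forall t : R, 0 <= t -> (1 + t) ^+ q <= C * expR ((1 - x) / 4 * t `^ x)) ->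
  expR (s * a `^ x) / (expR (s * b `^ x) * expR (s * c `^ x)) <= C * (FF q b + FF q c).
Proof.
move=> x0 x1 s4 a0 b0 c0 abc HC.
wlog bc : b c b0 c0 abc / b <= c.
  move=> H; case: (lerP b c) => [h|/ltW h]; first exact: H.
  rewrite (mulrC (expR (s * b `^ x))) (addrC (FF q b)); apply: H => //; lra.
have hb := HC b b0.
have pb : 0 < (1 + b) ^+ q by rewrite exprn_gt0 //; lra.
have eb := expR_gt0 ((1 - x) / 4 * b `^ x).
have C0 : 0 < C.
  have h : 0 < C * expR ((1 - x) / 4 * b `^ x) by exact: (lt_le_trans pb hb).
  by rewrite pmulr_lgt0 in h.
apply: (@le_trans _ _ (C * FF q b)); last first.
  apply: ler_wpM2l; first exact: ltW.
  by rewrite lerDl FF_ge0.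
have hsa := @subadd x a b c x0 (ltW x1) a0 b0 bc abc.
rewrite -expRD -expRB.
set y := (1 - x) / 4 * b `^ x.
apply: (@le_trans _ _ (expR (- y))).
  rewrite ler_expR /y.
  have bx0 : 0 <= b `^ x by apply: powR_ge0.
  have h1 : 0 <= (s - 4^-1) * ((1 - x) * b `^ x) by rewrite mulr_ge0 //; nra.
  nra.
rewrite expRN /FF.
rewrite -[X in X <= _]mul1r ler_pdivrMr // mulrAC ler_pdivlMr //.
by rewrite mul1r.
Qed.


Lemma tele_ind (u : nat -> R) (M K : nat) :
  \sum_(k < K.+1) (M <= k)%N%:R * (u k - u k.+1) = (M <= K)%N%:R * (u M - u K.+1).
Proof.
elim: K => [|K IH].
  rewrite big_ord_recr big_ord0 /= add0r.
  by case: M => [|M] //=; rewrite !mul0r.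
rewrite big_ord_recr /= IH.
case: (ltngtP M K.+1) => h.
- have hK : (M <= K)%N by lia.
  by rewrite hK !mul1r addrA subrK.
- have h1 : (M <= K)%N = false by lia.
  have h2 : (M <= K.+1)%N = false by lia.
  by rewrite h1 !mul0r addr0.
- by subst M; rewrite subrr mulr0 add0r.

Qed.

Lemma count_nat N a L : (\sum_(j < N) (a <= j < a + L)%N = minn N (a + L) - a)%N.
Proof.
elim: N => [|N IH]; first by rewrite big_ord0; lia.
rewrite big_ord_recr /= IH.
case hb: (a <= N < a + L)%N => /=; [move/andP: hb => [h1 h2] | move/negbT: hb; rewrite negb_and -ltnNge -leqNgt => /orP [h|h]]; lia.
Qed.

Lemma harm_tele n : \sum_(k < n) ((k.+1%:R)^-1 - (k.+2%:R)^-1) = 1 - (n.+1%:R)^-1 :> R.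
Proof.
elim: n => [|n IH]; first by rewrite big_ord0 invr1 subrr.
by rewrite big_ord_recr /= IH addrA subrK.
Qed.

Lemma max_indic (I : finType) (F : I -> nat) k :
  ((\max_i F i <= k)%N%:R : R) = \prod_i ((F i <= k)%N%:R).
Proof.
case: (boolP [forall i, F i <= k]%N) => [/forallP h|].
  have -> : (\max_i F i <= k)%N by apply/bigmax_leqP => i _; exact: h.
  by rewrite big1 // => i _; rewrite h.
rewrite negb_forall => /existsP [i hi].
have -> : (\max_i F i <= k)%N = false.
  apply/negbTE; apply: contra hi => /bigmax_leqP h; exact: h.
by rewrite (bigD1 i) //= (negbTE hi) mul0r.
Qed.
End Aux.

Section B.
Variable R : realType.
Local Notation FF := (FF R).

Definition pt (nu K : nat) (f : {ffun 'I_nu -> 'I_(K + K).+1}) : Zpt nu :=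
  [ffun i => (f i : nat)%:Z - K%:Z].

Arguments pt {nu K}.

Lemma FF_decr q k : FF q k.+1%:R <= FF q k%:R.
Proof.
have h0 : 0 <= k%:R :> R by apply: ler0n.
have h1 : k.+1%:R = k%:R + 1 :> R by rewrite -addn1 natrD.
rewrite /FF h1 lef_pV2 ?posrE ?exprn_gt0 //; try lra.
rewrite lerXn2r ?nnegrE //; lra.
Qed.

Lemma box_bound nu K :
  \sum_(f : {ffun 'I_nu -> 'I_(K + K).+1}) FF nu.+1 (maxnorm R (pt f))
    <= 2 ^+ nu * (nu.+1%:R + 1).
Proof.
set d := fun j : nat => `|j%:Z - K%:Z|%N.
set Mf := fun f : {ffun 'I_nu -> 'I_(K + K).+1} => (\max_(i < nu) d (f i))%N.
have eM f : maxnorm R (pt f) = (Mf f)%:R.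
  by rewrite /maxnorm /Mf; congr (_%:R); apply: eq_bigr => i _; rewrite ffunE.
have MK f : (Mf f <= K)%N.
  apply/bigmax_leqP => i _; rewrite /d; have := ltn_ord (f i); lia.
set u := fun k : nat => FF nu.+1 k%:R.
have step f : FF nu.+1 (maxnorm R (pt f)) =
    u K.+1 + \sum_(k < K.+1) (Mf f <= k)%N%:R * (u k - u k.+1).
  by rewrite (tele_ind R u) MK mul1r eM addrC subrK.
under eq_bigr do rewrite step.
rewrite big_split /= sumr_const exchange_big /=.
rewrite card_ffun !card_ord.
have hA : u K.+1 *+ ((K + K).+1 ^ nu)%N <= 2 ^+ nu.
  rewrite -[X in X <= _]mulr_natr natrX /u /FF.
  have k0 : 0 <= K%:R :> R by apply: ler0n.
  have e1 : K.+1%:R = K%:R + 1 :> R by rewrite -addn1 natrD.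
  have e2 : (K + K).+1%:R = K%:R + K%:R + 1 :> R by rewrite -addn1 !natrD.
  rewrite e1 e2.
  have p1 : 0 < (1 + (K%:R + 1)) ^+ nu.+1 :> R by apply: exprn_gt0; lra.
  rewrite mulrC ler_pdivrMr // exprS.
  have h1 : (K%:R + K%:R + 1) ^+ nu <= (2 * (1 + (K%:R + 1))) ^+ nu :> R.
    by rewrite lerXn2r ?nnegrE //; lra.
  rewrite exprMn in h1.
  have h2 : 0 <= (1 + (K%:R + 1)) ^+ nu :> R by apply: exprn_ge0; lra.
  have h3 : 0 <= 2 ^+ nu :> R by rewrite exprn_ge0.
  apply: (le_trans h1); rewrite ler_wpM2l // ler_peMl //; lra.
have cnt j : \sum_(f : {ffun 'I_nu -> 'I_(K + K).+1}) (Mf f <= j)%N%:R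
    <= (j.*2.+1)%:R ^+ nu :> R.
  under eq_bigr do rewrite /Mf (max_indic R).
  rewrite -(bigA_distr_bigA (fun (i : 'I_nu) (k : 'I_(K + K).+1) => (d k <= j)%N%:R)) /=.
  rewrite prodr_const card_ord lerXn2r ?nnegrE ?sumr_ge0 ?ler0n //.
  rewrite -natr_sum ler_nat.
  apply: (@leq_trans (\sum_(k < (K + K).+1) (K - j <= k < K - j + j.*2.+1)%N)%N).
    by apply: leq_sum => k _; rewrite /d; case: (ltnP j (`|k%:Z - K%:Z|%N)) => h /=; [|lia].
  rewrite count_nat; lia.
have hB : \sum_(j < K.+1) \sum_(f : {ffun 'I_nu -> 'I_(K + K).+1})
      (Mf f <= j)%N%:R * (u j - u j.+1) <= 2 ^+ nu * nu.+1%:R.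
  under eq_bigr do rewrite -mulr_suml.
  apply: (@le_trans _ _ (\sum_(j < K.+1) (2 ^+ nu * nu.+1%:R * ((j.+1%:R)^-1 - (j.+2%:R)^-1)))).
    apply: ler_sum => j _; apply: le_trans (term_bound R nu j).
    by apply: ler_wpM2r; [rewrite subr_ge0; apply: FF_decr | apply: cnt].
  rewrite -mulr_sumr harm_tele ger_pMr ?mulr_gt0 ?exprn_gt0 ?ltr0n //.
rewrite mulrDr mulr1 addrC; exact: lerD.
Qed.

Lemma pt_inj nu K : injective (@pt nu K).
Proof.
move=> f g e; apply/ffunP => i; apply: val_inj.
have := congr1 (fun h : Zpt nu => h i) e; rewrite /= !ffunE; lia.
Qed.

Local Open Scope classical_set_scope.

Lemma esum_box nu (g : Zpt nu -> R) (M : R) : (forall m, 0 <= g m) ->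
  (forall K, \sum_(f : {ffun 'I_nu -> 'I_(K + K).+1}) g (pt f) <= M) ->
  (\esum_(m in [set: Zpt nu]) (g m)%:E <= M%:E)%E.
Proof.
move=> g0 hM; apply: ge_ereal_sup => _ [X [finX _] <-].
set K := (\max_(x <- finmap.enum_fset (fset_set X)) \max_(i < nu) `|x i|%N)%N.
set s := [seq pt f | f <- enum {ffun 'I_nu -> 'I_(K + K).+1}].
have us : uniq s by rewrite map_inj_uniq ?enum_uniq //; apply: pt_inj.
apply: (@le_trans _ _ (\sum_(t \in [set` s]) (g t)%:E)%E).
  apply: lee_fsum_nneg_subset => //.
  - exact: finite_seq.
  - move=> x; rewrite inE => Xx; rewrite inE /=.
    have xK : forall i, (`|x i| <= K)%N.
      move=> i; apply: (leq_trans (@leq_bigmax _ (fun i => `|x i|%N) i)).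
      have xX : x \in finmap.enum_fset (fset_set X).
        have := in_fset_set finX x; rewrite /= => ->; by rewrite inE.
      exact: (@leq_bigmax_seq _ _ xpredT (fun x : Zpt nu => \max_(i < nu) `|x i|%N) x xX).
    apply/mapP; exists [ffun i => inord (absz (x i + K%:Z)) : 'I_(K + K).+1].
      by rewrite mem_enum.
    apply/ffunP => i; rewrite !ffunE inordK; have := xK i; move: (x i) => z; lia.
  - by move=> t _; rewrite lee_fin g0.
rewrite -fsbig_seq // sumEFin lee_fin big_map big_enum /=.
exact: hM.
Qed.

Lemma maxnorm_ge0 nu (m : Zpt nu) : 0 <= maxnorm R m.
Proof. exact: ler0n. Qed.

Lemma maxnorm_tri nu (n m : Zpt nu) : maxnorm R n <= maxnorm R m + maxnorm R (zsub n m).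
Proof.
rewrite /maxnorm -natrD ler_nat; apply/bigmax_leqP => i _.
apply: leq_trans (leq_add (@leq_bigmax _ (fun i => `|m i|%N) i)
                          (@leq_bigmax _ (fun i => `|zsub n m i|%N) i)).
rewrite /zsub ffunE /=; move: (n i) (m i) => a b; lia.
Qed.

Lemma maxnorm0 nu (m : Zpt nu) : (forall i, m i = 0) -> maxnorm R m = 0.
Proof. by move=> h; rewrite /maxnorm big1 // => i _; rewrite h. Qed.

Lemma zsub_bij nu (n : Zpt nu) : set_bij [set: Zpt nu] [set: Zpt nu] (zsub n).
Proof.
split => //.
- move=> a b _ _ e; apply/ffunP => i.
  have := congr1 (fun h : Zpt nu => h i) e; rewrite /zsub /= !ffunE; lia.
- move=> y _; exists (zsub n y) => //; apply/ffunP => i; rewrite /zsub !ffunE; ring.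
Qed.

Lemma pointwise nu (x : R) : 0 < x -> x <= 1 ->
  exists C : R, 0 <= C /\ forall (n m : Zpt nu) (s : R), 4^-1 <= s ->
    Dterm x s n m <= C * (FF nu.+1 (maxnorm R m) + FF nu.+1 (maxnorm R (zsub n m))).
Proof.
move=> x0 x1.
have hb := maxnorm_ge0; have ht := maxnorm_tri.
case: (ltrP x 1) => hx.
  have d0 : 0 < (1 - x) / 4 by rewrite divr_gt0 //; lra.
  have [C [C0 HC]] := growth R x ((1 - x) / 4) nu.+1 x0 d0.
  exists C; split => // n m s hs.
  rewrite /Dterm hx /Dterm_sub.
  apply: pt_sub => //. all: try exact: hb. all: try exact: ht.
exists (2 ^+ nu.+1); split; first by rewrite exprn_ge0.
move=> n m s hs; rewrite /Dterm ltNge hx /= /Dterm_one /Dweight.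
apply: pt_one; [lra|exact: hb|exact: hb|exact: hb|exact: ht].
Qed.

End B.

Theorem proposition17 (R : realType) (nu : nat) (x : R) :
  0 < x -> x <= 1 ->
  (1%:E <= Dconst nu x)%E /\ (Dconst nu x < +oo)%E.
Proof.
move=> x0 x1; split.
  set z : Zpt nu := [ffun=> 0].
  have h0 : (1%:E <= \esum_(m in [set: Zpt nu]) (Dterm x 1 z m)%:E)%E.
    apply: esum_ge; exists [set z]%classic; first by split; [exact: finite_set1|].
    rewrite fsbig_set1 lee_fin.
    have e1 : maxnorm R z = 0 by apply: maxnorm0 => i; rewrite ffunE.
    have e2 : maxnorm R (zsub z z) = 0 by apply: maxnorm0 => i; rewrite !ffunE subrr.
    rewrite /Dterm /Dterm_sub /Dterm_one /Dweight e1 e2.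
    case: ifP => _; last by rewrite mulr0 expR0 addr0 expr1n mulr1 mulr1 divr1.
    by rewrite powR0 ?gt_eqF // mulr0 expR0 mulr1 divr1.
  apply: le_trans h0 _; apply: ereal_sup_ubound; exists z; exists 1 => //.
    lra.
have [C [C0 HC]] := @pointwise R nu x x0 x1.
set W : R := 2 ^+ nu * (nu.+1%:R + 1).
have W0 : 0 <= W by rewrite /W mulr_ge0 ?exprn_ge0 // addr_ge0.
have FFm (m : Zpt nu) : 0 <= C * FF R nu.+1 (maxnorm R m).
  by rewrite mulr_ge0 // FF_ge0 // maxnorm_ge0.
have E : (\esum_(m in [set: Zpt nu]) (C * FF R nu.+1 (maxnorm R m))%:E <= (C * W)%:E)%E.
  apply: esum_box => // K.
  rewrite -mulr_sumr ler_wpM2l //; exact: box_bound.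
apply: (@le_lt_trans _ _ (C * W + C * W)%:E); last exact: ltey.
apply: ge_ereal_sup => _ [n [s hs ->]].
apply: le_trans.
  apply: (@le_esum R _ _ _ (fun m => (C * FF R nu.+1 (maxnorm R m))%:E
                                  + (C * FF R nu.+1 (maxnorm R (zsub n m)))%:E)%E).
  by move=> m _; rewrite -EFinD lee_fin -mulrDr; exact: HC.
rewrite esumD; [|by move=> m _; rewrite lee_fin|by move=> m _; rewrite lee_fin].
rewrite EFinD; apply: leeD => //.
rewrite -(reindex_esum [set: Zpt nu] [set: Zpt nu] (zsub n)
          (fun m => (C * FF R nu.+1 (maxnorm R m))%:E)) //.
exact: zsub_bij.
Qed.
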